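(* Let $\mathbf{u}=(u_1,\dots,u_n)$ be a utility profile over $C$, let $R\in\{R^C,R^V\}$, and suppose that $W(\mathbf{a})=\{c_j\}$ for some $c_j\in C$, where $\mathbf{a}$ is the truthful ballot vector. Then $\mathbf{a}$ is a PNE of the game $G=(\mathcal{T},R,\mathbf{u})$ if and only if for every $i\in N$ and every $c_k\in H(\mathbf{a})\setminus\{a_i\}$ it holds that $c_j\succ_i c_k$.
   Context: Let $C=\{c_1,\dots,c_m\}$ be candidates and $N=\{1,\dots,n\}$ voters, each with an injective utility function $u_i:C\to\mathbb{N}$ inducing $c\succ_i c'$ iff $u_i(c)>u_i(c')$; $a_i$ is $i$'s top candidate and $\mathbf{a}=(a_1,\dots,a_n)$. A ballot vector is $\mathbf{b}=(b_1,\dots,b_n)$ with $b_i\in C\cup\{\bot\}$ ($\bot$ = abstain); $(\mathbf{b}_{-i},b')$ replaces $b_i$ by $b'$. $\mathrm{sc}(c,\mathbf{b})=|\{i:b_i=c\}|$, $M(\mathbf{b})=\max_c\mathrm{sc}(c,\mathbf{b})$, $W(\mathbf{b})=\{c:\mathrm{sc}(c,\mathbf{b})=M(\mathbf{b})\}$, $H(\mathbf{b})=\{c:\mathrm{sc}(c,\mathbf{b})=M(\mathbf{b})-1\}$. If $|W(\mathbf{b})|=1$ its element wins; otherwise under $R^C$ the winner is uniform on $W(\mathbf{b})$, and under $R^V$ a uniformly random voter $i\in N$ is chosen and the winner is $b_i$ if $b_i\in W(\mathbf{b})$, else $i$'s most preferred candidate in $W(\mathbf{b})$. Let $p_j(\mathbf{b})$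 be the probability $c_j$ wins. Fix $0<\varepsilon<\min\{1/m,1/n\}$. In the truth-biased setting $\mathcal{T}$, voter $i$'s utility is $U_i(\mathbf{b})=\sum_jp_j(\mathbf{b})u_i(c_j)$ if $b_i\in C\setminus\{a_i\}$, that plus $\varepsilon$ if $b_i=a_i$, and $-\infty$ if $b_i=\bot$. The game $(\mathcal{T},R,\mathbf{u})$ has players $N$ with action sets $C\cup\{\bot\}$; a PNE is a ballot vector $\mathbf{b}$ with $U_i(\mathbf{b})\ge U_i(\mathbf{b}_{-i},b')$ for all $i$ and $b'$. *)

(* Defs.v *)
From mathcomp Require Import all_boot all_order all_algebra.
Set Implicit Arguments. Unset Strict Implicit. Unset Printing Implicit Defensive.
Import Order.TTheory GRing.Theory Num.Theory.
Local Open Scope ring_scope.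

(* Tie-breaking rules R^C (uniform over candidates) and R^V (random voter). *)
Inductive rule := RC | RV.

Section Voting.
Variables (C : finType) (n : nat).

(* A ballot vector: voter i votes [Some c] for candidate c, or [None] (abstain = ⊥). *)
Definition ballot := 'I_n -> option C.

Definition update (b : ballot) (i : 'I_n) (b' : option C) : ballot :=
  fun k => if k == i then b' else b k.

Definition truthful (a : 'I_n -> C) : ballot := fun i => Some (a i).

Definition sc (c : C) (b : ballot) : nat := #|[set i | b i == Some c]|.
Definition Mx (b : ballot) : nat := (\max_(c : C) sc c b)%N.
Definition W (b : ballot) : {set C} := [set c | sc c b == Mx b].
Definition H (b : ballot) : {set C} := [set c | (sc c b).+1 == Mx b].

Definition best (u : 'I_n -> C -> nat) (i : 'I_n) (S : {set C}) (c : C) : bool :=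
  (c \in S) && [forall d in S, (u i d <= u i c)%N].

Variable R : realFieldType.

Definition prob (r : rule) (u : 'I_n -> C -> nat) (b : ballot) (c : C) : R :=
  if #|W b| == 1%N then ((c \in W b)%:R) else
  match r with
  | RC => (c \in W b)%:R / (#|W b|)%:R
  | RV => (#|[set i | if b i is Some d then
                        (if d \in W b then d == c else best u i (W b) c)
                      else best u i (W b) c]|)%:R / n%:R
  end.

Definition exp_util (r : rule) (u : 'I_n -> C -> nat) (b : ballot) (i : 'I_n) : R :=
  \sum_(c : C) prob r u b c * (u i c)%:R.

(* Utility in the truth-biased setting; [None] encodes -infinity. *)
Definition U (r : rule) (u : 'I_n -> C -> nat) (a : 'I_n -> C) (eps : R)
    (b : ballot) (i : 'I_n) : option R :=
  match b i with
  | None => None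
  | Some c => Some (exp_util r u b i + (if c == a i then eps else 0))
  end.

Definition ule (x y : option R) : bool :=
  match x, y with
  | None, _ => true
  | Some _, None => false
  | Some x, Some y => x <= y
  end.

Definition is_PNE (r : rule) (u : 'I_n -> C -> nat) (a : 'I_n -> C) (eps : R)
    (b : ballot) : Prop :=
  forall (i : 'I_n) (b' : option C),
    ule (U r u a eps (update b i b') i) (U r u a eps b i).

End Voting.

(* Main.v *)
Require Import Defs.
From mathcomp Require Import all_boot all_order all_algebra.
From mathcomp Require Import zify ring lra.
Import Order.TTheory GRing.Theory Num.Theory.
Local Open Scope ring_scope.
Set Implicit Arguments. Unset Strict Implicit.

Lemma sc_sum (C : finType) (n : nat) (b : ballot C n) d :
  sc d b = (\sum_k (b k == Some d))%N.
Proof.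
rewrite /sc -sum1_card big_mkcond /=; apply: eq_bigr => k _.
by rewrite inE; case: (b k == Some d).
Qed.

Lemma sc_update (C : finType) (n : nat) (b : ballot C n) i x d :
  (sc d (update b i x) + (b i == Some d) = sc d b + (x == Some d))%N.
Proof.
rewrite !sc_sum (bigD1 i) //= [X in _ = (X + _)%N](bigD1 i) //=.
rewrite /update eqxx.
rewrite (eq_bigr (fun k => (b k == Some d) : nat)); last by move=> k /negbTE ->.
set s := (\sum_(_ | _) _)%N; lia.
Qed.

Lemma sc_le_Mx (C : finType) (n : nat) (b : ballot C n) d : (sc d b <= Mx b)%N.
Proof. exact: (leq_bigmax (F := fun c => sc c b)). Qed.

Lemma Mx_le (C : finType) (n : nat) (b : ballot C n) m :
  (forall d, sc d b <= m)%N -> (Mx b <= m)%N.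
Proof. by move=> h; apply/bigmax_leqP => d _; apply: h. Qed.

Lemma W_nonempty (C : finType) (n : nat) (b : ballot C n) (c0 : C) :
  exists w, w \in W b.
Proof.
have h0 : (0 < #|C|)%N by apply/card_gt0P; exists c0.
have [w hw] := bigop.eq_bigmax (fun c => sc c b) h0.
by exists w; rewrite inE /Mx hw.
Qed.

Lemma best_uniq (C : finType) (n : nat) (u : 'I_n -> C -> nat) k S c c' :
  injective (u k) -> best u k S c -> best u k S c' -> c = c'.
Proof.
move=> inj /andP[hc /forall_inP hc'] /andP[hd /forall_inP hd'].
apply: inj; apply/eqP; rewrite eqn_leq; apply/andP; split.
  exact: hd'.
exact: hc'.
Qed.

Lemma best_ex (C : finType) (n : nat) (u : 'I_n -> C -> nat) k (S : {set C}) c0 :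
  c0 \in S -> exists c, best u k S c.
Proof.
move=> h0.
have hS : (0 < #|S|)%N by apply/card_gt0P; exists c0.
have [w wS hw] := bigop.eq_bigmax_cond (u k) hS.
exists w; rewrite /best wS /=; apply/forall_inP => d dS.
by rewrite -hw; apply: (leq_bigmax_cond (F := u k)).
Qed.

Definition Pv (C : finType) (n : nat) (u : 'I_n -> C -> nat) (b : ballot C n) k c :=
  if b k is Some d then (if d \in W b then d == c else best u k (W b) c)
  else best u k (W b) c.

Lemma Pv_uniq (C : finType) (n : nat) (u : 'I_n -> C -> nat) (b : ballot C n) k :
  injective (u k) -> (exists c0 : C, c0 \in W b) ->
  exists w, forall c, Pv u b k c = (c == w).
Proof.
move=> inj [c0 h0]; have [w hw] := best_ex u k h0.
have hb : forall c, best u k (W b) c = (c == w).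
  move=> c; apply/idP/eqP => [hc|->//]; exact: best_uniq inj hc hw.
rewrite /Pv; case: (b k) => [d|]; last by exists w.
case: (d \in W b); last by exists w.
by exists d => c; rewrite eq_sym.
Qed.

Lemma sum_Pv (C : finType) (n : nat) (u : 'I_n -> C -> nat) (b : ballot C n) :
  (forall k, injective (u k)) -> (exists c0 : C, c0 \in W b) ->
  (\sum_c #|[set k | Pv u b k c]| = n)%N.
Proof.
move=> inj hW.
transitivity (\sum_c \sum_k (Pv u b k c : nat))%N.
  apply: eq_bigr => c _; rewrite -sum1_card big_mkcond /=; apply: eq_bigr => k _.
  by rewrite inE; case: (Pv u b k c).
rewrite exchange_big /= -[n in RHS]card_ord -sum1_card.
apply: eq_bigr => k _.
have [w hw] := Pv_uniq (inj k) hW.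
rewrite (bigD1 w) //= hw eqxx big1 // => c hc; by rewrite hw (negbTE hc).
Qed.

Lemma sum_in (R : realFieldType) (C : finType) (A : {set C}) :
  \sum_c ((c \in A)%:R : R) = (#|A|)%:R.
Proof.
rewrite -natr_sum -sum1_card [in RHS]big_mkcond /=; congr (_%:R).
Qed.

Lemma probE (R : realFieldType) (C : finType) (n : nat) r (u : 'I_n -> C -> nat) (b : ballot C n) c :
  prob R r u b c = if #|W b| == 1%N then ((c \in W b)%:R) else
  match r with
  | RC => (c \in W b)%:R / (#|W b|)%:R
  | RV => (#|[set k | Pv u b k c]|)%:R / n%:R
  end.
Proof. by []. Qed.

Lemma prob_ge0 (R : realFieldType) (C : finType) (n : nat) r (u : 'I_n -> C -> nat) (b : ballot C n) c :
  0 <= prob R r u b c.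
Proof.
rewrite probE; case: ifP => _; first exact: ler0n.
by case: r; apply: divr_ge0; apply: ler0n.
Qed.

Lemma Pv_out (C : finType) (n : nat) (u : 'I_n -> C -> nat) (b : ballot C n) k c :
  c \notin W b -> Pv u b k c = false.
Proof.
move=> hc; rewrite /Pv.
have hb : best u k (W b) c = false by rewrite /best (negbTE hc).
case: (b k) => [d|//]; case: ifP => // hd.
by apply/negbTE; apply: contraNneq hc => <-.
Qed.

Lemma prob_out (R : realFieldType) (C : finType) (n : nat) r (u : 'I_n -> C -> nat) (b : ballot C n) c :
  c \notin W b -> prob R r u b c = 0.
Proof.
move=> hc; rewrite probE (negbTE hc) /=; case: ifP => _ //.
case: r; first by rewrite mul0r.
rewrite (_ : [set k | Pv u b k c] = set0) ?cards0 ?mul0r //.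
by apply/setP => k; rewrite !inE Pv_out.
Qed.

Lemma prob_sum (R : realFieldType) (C : finType) (n : nat) r (u : 'I_n -> C -> nat) (b : ballot C n)
  (i0 : 'I_n) (c0 : C) :
  (forall k, injective (u k)) -> \sum_c prob R r u b c = 1.
Proof.
move=> inj; have [w hw] := W_nonempty b c0.
have hW0 : #|W b| != 0%N by rewrite -lt0n; apply/card_gt0P; exists w.
case h1 : (#|W b| == 1%N).
  rewrite (eq_bigr (fun c => (c \in W b)%:R)); last by move=> c _; rewrite probE h1.
  by rewrite sum_in (eqP h1).
case: r.
  rewrite (eq_bigr (fun c => (c \in W b)%:R / (#|W b|)%:R)); last by move=> c _; rewrite probE h1.
  by rewrite -mulr_suml sum_in divff // pnatr_eq0.
rewrite (eq_bigr (fun c => (#|[set k | Pv u b k c]|)%:R / n%:R)); last by move=> c _; rewrite probE h1.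
rewrite -mulr_suml -natr_sum sum_Pv //; last by exists w.
by rewrite divff // pnatr_eq0 -lt0n (leq_ltn_trans (leq0n i0) (ltn_ord i0)).
Qed.

Lemma exp_single (R : realFieldType) (C : finType) (n : nat) r (u : 'I_n -> C -> nat) (b : ballot C n) i w :
  W b = [set w] -> exp_util R r u b i = (u i w)%:R.
Proof.
move=> hW; rewrite /exp_util (bigD1 w) //= big1 ?addr0.
  by rewrite probE hW cards1 /= inE eqxx mul1r.
by move=> c hc; rewrite probE hW cards1 /= inE (negbTE hc) mul0r.
Qed.

Lemma exp_le (R : realFieldType) (C : finType) (n : nat) r (u : 'I_n -> C -> nat) (b : ballot C n) i w :
  (forall k, injective (u k)) ->
  (forall c, c \in W b -> (u i c <= u i w)%N) -> exp_util R r u b i <= (u i w)%:R.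
Proof.
move=> inj hle; rewrite /exp_util.
apply: (@le_trans _ _ (\sum_c prob R r u b c * (u i w)%:R)).
  apply: ler_sum => c _; case hc: (c \in W b).
    by apply: ler_wpM2l; [exact: prob_ge0 | rewrite ler_nat; exact: hle].
  by rewrite prob_out ?hc // !mul0r.
by rewrite -mulr_suml (prob_sum R r b i w) // mul1r.
Qed.

Lemma exp_ge2 (R : realFieldType) (C : finType) (n : nat) r (u : 'I_n -> C -> nat) (b : ballot C n) i w c :
  (forall k, injective (u k)) -> W b = [set w; c] -> c != w -> (u i w < u i c)%N ->
  (u i w)%:R + prob R r u b c <= exp_util R r u b i.
Proof.
move=> inj hW hcw hlt.
have hs := prob_sum R r b i w inj.
have -> : exp_util R r u b i = (u i w)%:R + \sum_d prob R r u b d * ((u i d)%:R - (u i w)%:R).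
  rewrite /exp_util.
  under [X in _ = _ + X]eq_bigr => d _ do rewrite mulrBr.
  by rewrite sumrB -mulr_suml hs mul1r addrC subrK.
rewrite lerD2l (bigD1 c) //= big1 ?addr0.
  rewrite -{1}[prob R r u b c]mulr1; apply: ler_wpM2l; first exact: prob_ge0.
  by rewrite -natrB ?ler1n ?subn_gt0 // ltnW.
move=> d hd; case: (d =P w) => [->|hdw]; first by rewrite subrr mulr0.
rewrite prob_out ?mul0r // hW !inE; apply/norP; split; apply/eqP => //.
by move: hd => /eqP.
Qed.

Lemma eq_Some (C : eqType) (x y : C) : (Some x == Some y) = (x == y).
Proof. by []. Qed.

Lemma update_at (C : finType) (n : nat) (b : ballot C n) i x : update b i x i = x.
Proof. by rewrite /update eqxx. Qed.

Lemma W_ext (C : finType) (n : nat) (b1 b2 : ballot C n) :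
  (forall d, sc d b1 = sc d b2) -> W b1 = W b2.
Proof.
move=> h; have hM : Mx b1 = Mx b2 by rewrite /Mx; apply: eq_bigr => d _; exact: h.
by apply/setP => d; rewrite !inE h hM.
Qed.

Lemma Mx_eq (C : finType) (n : nat) (b : ballot C n) c m :
  sc c b = m -> (forall d, sc d b <= m)%N -> Mx b = m.
Proof.
move=> hc hd; apply/eqP; rewrite eqn_leq Mx_le //= -hc; exact: sc_le_Mx.
Qed.

Unset Implicit Arguments.

Theorem theorem5 (R : realFieldType) (C : finType) (n : nat)
    (u : 'I_n -> C -> nat) (a : 'I_n -> C) (eps : R) (r : rule) (cj : C) :
  (forall i, injective (u i)) ->
  (forall i c, c != a i -> (u i c < u i (a i))%N) ->
  0 < eps -> eps < 1 / (#|C|)%:R -> eps < 1 / n%:R ->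
  W (truthful a) = [set cj] ->
  (is_PNE r u a eps (truthful a) <->
   forall (i : 'I_n) (ck : C), ck \in H (truthful a) -> ck != a i ->
     (u i ck < u i cj)%N).
Proof.
move=> inj tb eps0 epsC epsN hW.
set a' := truthful a.
have hM : sc cj a' = Mx a' by apply/eqP; move: (set11 cj); rewrite -hW inE.
have hlt : forall d, d != cj -> (sc d a' < Mx a')%N.
  move=> d hd; rewrite ltn_neqAle sc_le_Mx andbT.
  by apply: contra hd => hd'; rewrite -in_set1 -hW inE.
have hUa : forall i, U r u a eps a' i = Some ((u i cj)%:R + eps).
  by move=> i; rewrite /U /a' /truthful eqxx (exp_single _ _ _ _ hW).
have hsc : forall i c d, (sc d (update a' i (Some c)) + (a i == d) = sc d a' + (c == d))%N.
  by move=> i c d; exact: (sc_update a' i (Some c) d).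
split.
- move=> hP i ck hck hcka.
  have hckj : ck != cj.
    apply/eqP => e; move: hck; rewrite inE e hM => /eqP; lia.
  have hHck : (sc ck a').+1 = Mx a' by apply/eqP; move: hck; rewrite inE.
  case: (a i =P cj) => [hai|hai]; first by rewrite -hai; exact: tb.
  case: (ltngtP (u i ck) (u i cj)) => // [hgt|heq]; last first.
    by move: hckj; rewrite (inj _ _ _ heq) eqxx.
  exfalso.
  pose b' := update a' i (Some ck).
  have hsc' : forall d, (sc d b' + (a i == d) = sc d a' + (ck == d))%N := hsc i ck.
  have e1 := hsc' cj; have e2 := hsc' ck.
  have hcj' : sc cj b' = Mx a'.
    move: e1; rewrite (negbTE hckj) -hM (introF eqP hai) /=; lia.
  have hck' : sc ck b' = Mx a'.
    move: e2; rewrite eqxx; case: (a i =P ck) => [e|_]; first by move: hcka; rewrite e eqxx.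
    lia.
  have hMb : Mx b' = Mx a'.
    apply: (Mx_eq hcj') => d; case: (d =P ck) => [->|hdk]; first by rewrite hck'.
    have := hsc' d; have := sc_le_Mx a' d; rewrite (introF eqP (fun e => hdk (esym e))) /=; lia.
  have hWb : W b' = [set cj; ck].
    apply/setP => d; rewrite !inE hMb.
    case: (d =P cj) => [->|hdj]; first by rewrite hcj' eqxx.
    case: (d =P ck) => [->|hdk]; first by rewrite hck' eqxx.
    have := hsc' d; have := hlt d (introN eqP hdj).
    rewrite (introF eqP (fun e => hdk (esym e))) /=.
    move=> h1 h2; apply/negbTE; rewrite neq_ltn; apply/orP; left; lia.
  have hge := exp_ge2 R r (i:=i) inj hWb hckj hgt.
  have hpe : eps < prob R r u b' ck.
    have h2 : #|W b'| = 2%N by rewrite hWb cards2 eq_sym hckj.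
    have hin : ck \in W b' by rewrite hWb !inE eqxx orbT.
    have hn : (0 < n)%N by apply: leq_ltn_trans (ltn_ord i).
    rewrite probE h2 /=; have [-> | ->] : r = RC \/ r = RV by case: (r); auto.
      rewrite hin /=.
      have hC : (2 <= #|C|)%N by rewrite -h2 max_card.
      have hC' : (2:R) <= (#|C|)%:R by rewrite (ler_nat R 2).
      move: epsC; rewrite ltr_pdivlMr ?ltr0n ?(leq_trans _ hC) // mul1r => hc.
      rewrite -div1r ltr_pdivlMr ?ltr0n //; nra.
    have hS : (1 <= #|[set k | Pv u b' k ck]|)%N.
      apply/card_gt0P; exists i; rewrite inE /Pv /b' update_at hin eqxx //.
    have hS' : (1:R) <= (#|[set k | Pv u b' k ck]|)%:R by rewrite (ler_nat R 1).
    move: epsN; rewrite !ltr_pdivlMr ?ltr0n // => hc. lra.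
  have := hP i (Some ck); rewrite hUa /U update_at /= (negbTE hcka) addr0.
  move=> h; lra.
- move=> hcond i [c|]; rewrite hUa /U ?update_at //=.
  case: (c =P a i) => [->|hca].
    have hW' : W (update a' i (Some (a i))) = [set cj].
      rewrite -hW; apply: W_ext => d; apply/eqP; rewrite -(eqn_add2r (a i == d)); apply/eqP; exact: hsc i (a i) d.
    by rewrite (exp_single _ _ _ _ hW').
  suff : exp_util R r u (update a' i (Some c)) i <= (u i cj)%:R by move=> h; lra.
  pose b' := update a' i (Some c).
  have hsc' : forall d, (sc d b' + (a i == d) = sc d a' + (c == d))%N := hsc i c.
  apply: exp_le => // d; rewrite inE => /eqP hd.
  case: (d =P cj) => [->//|hdj].
  case: (a i =P cj) => [hai|hai].
    by rewrite -hai; apply: ltnW; apply: tb; apply/eqP; rewrite hai.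
  have h1 := hsc' cj; rewrite (introF eqP hai) in h1.
  have h2 := sc_le_Mx b' cj; have h3 := hsc' d; have h4 := hlt d (introN eqP hdj).
  case: (c =P d) => [ec|ecd]; last first.
    rewrite (introF eqP ecd) in h3; exfalso; move: hd; rewrite -/b'; lia.
  subst d; apply: ltnW; apply: hcond; last by apply/eqP.
  rewrite inE; apply/eqP; move: hd; rewrite -/b' eqxx in h3 *; lia.
Qed.
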